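(* Consider the store-and-forward packet routing problem on the uni-directional line with $n$ nodes, buffer size $B=0$ at every node and uniform link capacity $c\ge 1$. The nearest-to-go policy is an optimal policy: for every input sequence $\sigma$ of packet requests, the number of packets it delivers equals the maximum throughput achievable on $\sigma$.
   Context: Store-and-forward packet routing model on the uni-directional line $v_1\to v_2\to\cdots\to v_n$: each edge can carry at most $c$ packets per time step and traversing an edge takes one time step; since $B=0$, nodes cannot store packets. Each packet request $r_i=(a_i,b_i,t_i,d_i)$ has source $a_i$, destination $b_i$ equal to $a_i$ or a later node of the path, input time $t_i$ (the packet is input at $a_i$ at time $t_i$ via a local input; any number of packets may be input to a node in a step), and a deadline $d_i$ that is feasible, i.e. $d_i \ge t_i + \mathrm{dist}(a_i,b_i)$ (possibly $d_i=\infty$). In each time step, each node removes (delivers) the packets destined to it, forwards at most $c$ of the remaining present packets (those arriving along the incoming edge and those input locally) along its outgoing edge, and deletes the rest. Throughput = number of packets delivered by their deadline. The nearest-to-go policy: at each node and time step, among the present packets not destined to the node, forward the (at most) $c$ packets whose destinations are nearest to the node and delete the others. *)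

(* Defs.v *)
From mathcomp Require Import all_boot.
From mathcomp Require Import boolp.
Set Implicit Arguments. Unset Strict Implicit. Unset Printing Implicit Defensive.

(* Nodes of the line v_1 -> ... -> v_n are numbered 0, ..., n-1;
   the edge leaving node v goes to node v.+1. Times are natural numbers. *)

(* A packet request r = (a, b, t, d); deadline None means d = infinity. *)
Record request := Req { src : nat; dst : nat; tin : nat; dl : option nat }.

Definition req0 : request := Req 0 0 0 None.

Definition meets_deadline (tau : nat) (d : option nat) : Prop :=
  match d with None => True | Some d => tau <= d end.

Definition wf_request (n : nat) (r : request) : Prop :=
  src r <= dst r < n /\ meets_deadline (tin r + (dst r - src r)) (dl r).

Definition rq (s : seq request) (i : 'I_(size s)) : request := nth req0 s i.

(* A schedule: F v tau i = true iff node v forwards packet i along its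
   outgoing edge at time step tau (it then arrives at v.+1 at time tau.+1). *)
Definition schedule (s : seq request) := nat -> nat -> 'I_(size s) -> bool.

(* Packet i is present at node v at time tau: either it is input there
   (locally) at that time, or it was forwarded by node v-1 at time tau-1.
   (B = 0: nodes cannot store packets.) *)
Definition present (s : seq request) (F : schedule s) (i : 'I_(size s))
    (v tau : nat) : bool :=
  ((src (rq i) == v) && (tin (rq i) == tau))
  || [&& 0 < v, 0 < tau & F v.-1 tau.-1 i].

(* Admissible behaviour: a node only forwards packets present at it and not
   destined to it, along an existing edge, and at most c per edge per step;
   all other present packets are delivered (if destined here) or deleted. *)
Definition valid_schedule (n c : nat) (s : seq request) (F : schedule s) : Prop :=
  (forall v tau (i : 'I_(size s)), F v tau i ->
      [&& present F i v tau, dst (rq i) != v & v.+1 < n])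
  /\ (forall v tau, #|[pred i | F v tau i]| <= c).

Definition delivered (s : seq request) (F : schedule s) (i : 'I_(size s)) : Prop :=
  exists tau, present F i (dst (rq i)) tau /\ meets_deadline tau (dl (rq i)).

Definition throughput (s : seq request) (F : schedule s) : nat :=
  #|[pred i | `[< delivered F i >]]|.

Definition nearest_to_go (n c : nat) (s : seq request) (F : schedule s) : Prop :=
  valid_schedule n c F /\
  forall v tau,
    let P := [pred i | present F i v tau && (dst (rq i) != v)] in
    #|[pred i | F v tau i]| = minn c #|P| /\
    (forall i j, F v tau i -> P j -> ~~ F v tau j -> dst (rq i) <= dst (rq j)).

(* Main.v *)
Require Import Defs.
From mathcomp Require Import all_boot.
From mathcomp Require Import boolp.
From mathcomp Require Import zify.
Set Implicit Arguments. Unset Strict Implicit. Unset Printing Implicit Defensive.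


Lemma present_inv n (s : seq request) (H : schedule s) :
  (forall i : 'I_(size s), wf_request n (rq i)) ->
  (forall v tau (i : 'I_(size s)), H v tau i ->
      [&& present H i v tau, dst (rq i) != v & v.+1 < n]) ->
  forall v tau i, present H i v tau ->
    [/\ src (rq i) <= v, tau + src (rq i) = tin (rq i) + v & v <= dst (rq i)].
Proof.
move=> wf Hv; elim=> [|v IH] tau i.
  rewrite /present /= orbF => /andP[/eqP e1 /eqP e2].
  by have [/andP [h1 h2] _] := wf i; split; lia.
rewrite /present /= => /orP [/andP[/eqP e1 /eqP e2]|].
  by have [/andP [h1 h2] _] := wf i; split; lia.
case: tau => [//|tau] /= /Hv /and3P [pr ne _].
have [a b c'] := IH _ _ pr; split; lia.
Qed.
Lemma card_split (T : finType) (P Q : pred T) :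
  #|[pred i | P i]| = #|[pred i | P i && Q i]| + #|[pred i | P i && ~~ Q i]|.
Proof.
rewrite -!sum1_card (bigID Q) /=.
congr (_ + _); apply: eq_bigl => i; by rewrite ?inE.
Qed.

Definition dlv (s : seq request) (H : schedule s) i :=
  present H i (dst (rq i)) (tin (rq i) + (dst (rq i) - src (rq i))).
Definition cum (s : seq request) (H : schedule s) v tau :=
  #|[pred i | dlv H i && (dst (rq i) <= v) && (tau + src (rq i) == tin (rq i) + v)]|.

Lemma cum_rec n (s : seq request) (H : schedule s) :
  (forall i : 'I_(size s), wf_request n (rq i)) ->
  (forall v tau (i : 'I_(size s)), H v tau i ->
      [&& present H i v tau, dst (rq i) != v & v.+1 < n]) ->
  forall v tau, cum H v tau =
    (if (0 < v) && (0 < tau) then cum H v.-1 tau.-1 else 0)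
    + #|[pred i | present H i v tau && (dst (rq i) == v)]|.
Proof.
move=> wf Hv v tau; rewrite /cum (card_split _ (fun i => dst (rq i) == v)) addnC.
congr (_ + _); last first.
  apply: eq_card => i; rewrite !inE /=.
  apply/idP/idP.
    case/andP => /andP [/andP [dl le] /eqP dg] /eqP de.
    have [/andP [h1 h2] _] := wf i.
    move: dl; rewrite /dlv de.
    have -> : tin (rq i) + (v - src (rq i)) = tau by lia.
    by move=> ->; rewrite eqxx.
  case/andP => pr /eqP de.
  have [a b c'] := present_inv wf Hv pr.
  have [/andP [h1 h2] _] := wf i.
  rewrite /dlv de.
  have -> : tin (rq i) + (v - src (rq i)) = tau by lia.
  rewrite pr /=; apply/andP; split; [apply/andP; split|]; apply/eqP || idtac; lia.
case: v => [|v]; case: tau => [|tau] /=.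
- apply: eq_card0 => i; rewrite !inE; apply/negP; lia.
- apply: eq_card0 => i; rewrite !inE; apply/negP; lia.
- apply: eq_card0 => i; rewrite !inE; apply/negP.
  have [/andP [h1 h2] _] := wf i; lia.
apply: eq_card => i; rewrite !inE /=.
apply/idP/idP.
  case/andP => /andP [/andP [-> le] /eqP dg] ne /=.
  apply/andP; split; [|apply/eqP]; lia.
case/andP => /andP [-> le] /eqP dg /=.
apply/andP; split; [apply/andP; split; [|apply/eqP]|]; lia.
Qed.

Definition fw (s : seq request) (H : schedule s) v tau x :=
  #|[pred i | H v tau i && (dst (rq i) <= x)]|.
Definition cnd (s : seq request) (H : schedule s) v tau x :=
  #|[pred i | present H i v tau && (dst (rq i) != v) && (dst (rq i) <= x)]|.
Definition inp (s : seq request) v tau x :=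
  #|[pred i : 'I_(size s) | (src (rq i) == v) && (tin (rq i) == tau) && (dst (rq i) <= x)]|.

Lemma E_eq n (s : seq request) (H : schedule s) :
  (forall i : 'I_(size s), wf_request n (rq i)) ->
  (forall v tau (i : 'I_(size s)), H v tau i ->
      [&& present H i v tau, dst (rq i) != v & v.+1 < n]) ->
  forall v tau x, v <= x ->
  cum H v tau + cnd H v tau x =
  (if (0 < v) && (0 < tau) then cum H v.-1 tau.-1 + fw H v.-1 tau.-1 x else 0)
  + inp s v tau x.
Proof.
move=> wf Hv v tau x vx.
have eb : #|[pred i | present H i v tau && (dst (rq i) <= x)]| =
   #|[pred i | present H i v tau && (dst (rq i) == v)]| + cnd H v tau x.
  rewrite (card_split _ (fun i => dst (rq i) == v)); congr (_ + _);
    apply: eq_card => i; rewrite !inE /=.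
    case: (boolP (dst (rq i) == v)) => [/eqP ->|]; rewrite ?andbT ?andbF //.
    by rewrite vx andbT.
  by rewrite -!andbA; congr (_ && _); rewrite andbC.
have ec : #|[pred i | present H i v tau && (dst (rq i) <= x)]| =
   inp s v tau x + (if (0 < v) && (0 < tau) then fw H v.-1 tau.-1 x else 0).
  rewrite (card_split _ (fun i => (src (rq i) == v) && (tin (rq i) == tau)));
    congr (_ + _).
    apply: eq_card => i; rewrite !inE /= /present.
    by case: ((src (rq i) == v) && (tin (rq i) == tau)); rewrite ?andbT ?andbF.
  case: ifP => [/andP [v0 t0]|v0].
    apply: eq_card => i; rewrite !inE /= /present v0 t0 /=.
    case: (boolP (H v.-1 tau.-1 i)) => Hi; rewrite ?orbF ?orbT /=; last first.
      by case: ((src (rq i) == v) && (tin (rq i) == tau)); rewrite ?andbF.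
    have /and3P [pr _ _] := Hv _ _ _ Hi.
    have [a _ _] := present_inv wf Hv pr.
    have -> : (src (rq i) == v) = false by apply/negP => /eqP; lia.
    by rewrite /= andbT.
  apply: eq_card0 => i; rewrite !inE /present.
  case: ((src (rq i) == v) && (tin (rq i) == tau)); rewrite ?andbF //=.
  by move: v0; case: (0 < v); case: (0 < tau).
rewrite (cum_rec wf Hv).
move: ec; case: ifP => _ ec; lia.
Qed.

Lemma fw_le_cnd n c (s : seq request) (H : schedule s) :
  valid_schedule n c H -> forall v tau x,
  fw H v tau x <= cnd H v tau x /\ fw H v tau x <= c.
Proof.
move=> [Hv Hc] v tau x; split.
  apply: subset_leq_card; apply/subsetP => i; rewrite !inE /=.
  by case/andP => /Hv /and3P [-> -> _] ->.
apply: leq_trans (Hc v tau); apply: subset_leq_card; apply/subsetP => i.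
by rewrite !inE /= => /andP [].
Qed.

Lemma greedy n c (s : seq request) (F : schedule s) :
  nearest_to_go n c F -> forall v tau x,
  fw F v tau x = minn c (cnd F v tau x).
Proof.
move=> [[Hv Hc] Hn] v tau x.
have [Hcard Hord] := Hn v tau.
have sub1 : fw F v tau x <= cnd F v tau x by have [] := fw_le_cnd (conj Hv Hc) v tau x.
case: (pickP [pred j | present F j v tau && (dst (rq j) != v) && (dst (rq j) <= x)
                       && ~~ F v tau j]) => [j|none].
  rewrite !inE /= => /andP [/andP [/andP [pj nj] xj] Fj].
  have e1 : fw F v tau x = #|[pred i | F v tau i]|.
    apply: eq_card => i; rewrite !inE /=.
    case: (boolP (F v tau i)) => //= Fi.
    have := Hord i j Fi; rewrite !inE pj nj => /(_ isT Fj); lia.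
  have lt : #|[pred i | F v tau i]| <
            #|[pred i | present F i v tau && (dst (rq i) != v)]|.
    apply: proper_card; apply/properP; split.
      by apply/subsetP => i; rewrite !inE => /Hv /and3P [-> -> _].
    by exists j; rewrite !inE ?pj ?nj.
  lia.
have e1 : fw F v tau x = cnd F v tau x.
  apply: eq_card => i; rewrite !inE /=.
  apply/idP/idP.
    by case/andP => /Hv /and3P [-> -> _] ->.
  move=> h; have := none i; rewrite !inE /= h /= => /negbFE ->.
  by move: h => /andP [].
have : #|[pred i | F v tau i]| <= c by rewrite Hcard geq_minl.
have : fw F v tau x <= #|[pred i | F v tau i]|.
  apply: subset_leq_card; apply/subsetP => i; rewrite !inE /=.
  by case/andP.
lia.
Qed.

Lemma cnd0 n c (s : seq request) (H : schedule s) :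
  (forall i : 'I_(size s), wf_request n (rq i)) ->
  valid_schedule n c H -> forall v tau, cnd H v tau v = 0.
Proof.
move=> wf [Hv _] v tau; apply: eq_card0 => i; rewrite !inE /=.
apply/negP => /andP [/andP [pr ne] le].
have [_ _ h] := present_inv wf Hv pr; lia.
Qed.

Lemma step n c (s : seq request) (F G : schedule s) :
  (forall i : 'I_(size s), wf_request n (rq i)) ->
  nearest_to_go n c F -> valid_schedule n c G ->
  forall v tau,
  (forall y, v <= y ->
    (if (0 < v) && (0 < tau) then cum G v.-1 tau.-1 + fw G v.-1 tau.-1 y else 0)
    <= (if (0 < v) && (0 < tau) then cum F v.-1 tau.-1 + fw F v.-1 tau.-1 y else 0)) ->
  forall x, v <= x -> cum G v tau + fw G v tau x <= cum F v tau + fw F v tau x.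
Proof.
move=> wf NF VG v tau hp x vx.
have VF := NF.1.
have EFv := E_eq wf VF.1 tau (leqnn v).
have EGv := E_eq wf VG.1 tau (leqnn v).
have EFx := E_eq wf VF.1 tau vx.
have EGx := E_eq wf VG.1 tau vx.
rewrite (cnd0 wf VF) in EFv; rewrite (cnd0 wf VG) in EGv.
have hv := hp _ (leqnn v); have hx := hp _ vx.
have gF := greedy NF v tau x.
have [g1 g2] := fw_le_cnd VG v tau x.
move: hv hx EFv EGv EFx EGx; case: ifP => _; lia.
Qed.

Lemma main_ineq n c (s : seq request) (F G : schedule s) :
  (forall i : 'I_(size s), wf_request n (rq i)) ->
  nearest_to_go n c F -> valid_schedule n c G ->
  forall v tau x, v <= x -> cum G v tau + fw G v tau x <= cum F v tau + fw F v tau x.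
Proof.
move=> wf NF VG; elim=> [|v IH] tau; apply: (step wf NF VG) => y vy //.
case: tau => [//|tau] /=; apply: IH; lia.
Qed.

Lemma card_sum (T : finType) (P : pred T) : #|[pred i | P i]| = \sum_i (P i : nat).
Proof. by rewrite -sum1_card big_mkcond /=; apply: eq_bigr => i _; rewrite inE; case: (P i). Qed.

Lemma cum_sum (s : seq request) (H : schedule s) v tau :
  cum H v tau = \sum_i ((dlv H i && (dst (rq i) <= v) && (tau + src (rq i) == tin (rq i) + v)) : nat).
Proof. by rewrite /cum -sum1_card big_mkcond /=; apply: eq_bigr => i _; rewrite inE; case: ifP. Qed.

Lemma thr_eq n c (s : seq request) (H : schedule s) :
  (forall i : 'I_(size s), wf_request n (rq i)) ->
  valid_schedule n c H ->
  throughput H = \sum_(tau < (\max_(i : 'I_(size s)) tin (rq i)) + n.+1) cum H n tau.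
Proof.
move=> wf [Hv _].
have -> : throughput H = #|[pred i | dlv H i]|.
  apply: eq_card => i; rewrite !inE /=.
  apply/asboolP/idP.
    case=> tau [pr _]; have [a b _] := present_inv wf Hv pr.
    by rewrite /dlv; have -> : tin (rq i) + (dst (rq i) - src (rq i)) = tau by lia.
  move=> d; exists (tin (rq i) + (dst (rq i) - src (rq i))); split => //.
  by have [] := wf i.
rewrite card_sum.
under [in RHS]eq_bigr => tau _ do rewrite cum_sum.
rewrite exchange_big /=; apply: eq_bigr => i _.
have [/andP [h1 h2] _] := wf i.
have hm : tin (rq i) <= \max_(j : 'I_(size s)) tin (rq j) by apply: leq_bigmax.
have lt : tin (rq i) + n - src (rq i) < (\max_(j : 'I_(size s)) tin (rq j)) + n.+1 by lia.
rewrite (bigD1 (Ordinal lt)) //= big1 ?addn0.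
  case: (dlv H i) => //=; have -> : dst (rq i) <= n by lia.
  by rewrite /=; have -> : tin (rq i) + n - src (rq i) + src (rq i) == tin (rq i) + n by apply/eqP; lia.
move=> tau ne; case: (dlv H i) => //=; case: (dst (rq i) <= n) => //=.
case: eqP => // e; move/eqP: ne; case; apply: val_inj => /=; lia.
Qed.

Theorem mainTheorem4 (n c : nat) (s : seq request) :
  1 <= c ->
  (forall i : 'I_(size s), wf_request n (rq i)) ->
  forall F : schedule s, nearest_to_go n c F ->
  forall G : schedule s, valid_schedule n c G ->
  throughput G <= throughput F.
Proof.
move=> _ wf F NF G VG.
rewrite (thr_eq wf VG) (thr_eq wf NF.1); apply: leq_sum => tau _.
have := main_ineq wf NF VG tau (leqnn n).
have [h _] := fw_le_cnd VG n tau n; rewrite (cnd0 wf VG) in h.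
have [h2 _] := fw_le_cnd NF.1 n tau n; rewrite (cnd0 wf NF.1) in h2; lia.
Qed.
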